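(* Let $p\colon X\to Y$ be a right fibration of simplicial sets and let $y$ be a vertex of $Y$. Then the natural map $p^{-1}(y)\to P(p,y)$ is the inclusion of a deformation retract.
   Context: A right fibration is a map of simplicial sets with the right lifting property with respect to all horn inclusions $\Lambda^k[n]\to\Delta[n]$ with $n\ge1$ and $0<k\le n$. $P(Y,y)$ is the simplicial set with $P(Y,y)_n=\{z\colon\Delta[n+1]\to Y\mid z(0)=y\}$, simplicial operators induced by $\bar f\colon[m+1]\to[n+1]$, $\bar f(0)=0$, $\bar f(k)=f(k-1)+1$ for $f\colon[m]\to[n]$; it has base vertex $*$ given by the $1$-simplex constant at $y$. The map $\bar\jmath\colon P(Y,y)\to Y$ sends an $(n+1)$-simplex $z$ to its face opposite vertex $0$. The right homotopy fibre $P(p,y)$ is the pullback of $X\xrightarrow{p}Y\xleftarrow{\bar\jmath}P(Y,y)$. The fibre $p^{-1}(y)$ is the pullback of $X\xrightarrow{p}Y\xleftarrow{y}\Delta[0]$, and the map $p^{-1}(y)\to P(p,y)$ is induced by $*\colon\Delta[0]\to P(Y,y)$ (note $\bar\jmath\circ *=y$). *)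

(* Defs.v *)
From HB Require Import structures.
From mathcomp Require Import all_boot.
From mathcomp Require Import zify.
From Stdlib Require Import ProofIrrelevance.

Set Implicit Arguments.
Unset Strict Implicit.
Unset Printing Implicit Defensive.

Definition monob m n (f : {ffun 'I_m.+1 -> 'I_n.+1}) : bool :=
  [forall i : 'I_m.+1, forall j : 'I_m.+1, (i <= j) ==> (f i <= f j)].

Definition ohom (m n : nat) := {f : {ffun 'I_m.+1 -> 'I_n.+1} | monob f}.

Definition oapp m n (f : ohom m n) (i : 'I_m.+1) : 'I_n.+1 := val f i.

Lemma monobP m n (f : {ffun 'I_m.+1 -> 'I_n.+1}) :
  reflect (forall i j : 'I_m.+1, i <= j -> f i <= f j) (monob f).
Proof.
apply: (iffP forallP) => [H i j hij | H i].
  by move/forallP: (H i) => /(_ j) /implyP; apply.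
by apply/forallP => j; apply/implyP; apply: H.
Qed.

Lemma oapp_mono m n (f : ohom m n) (i j : 'I_m.+1) : i <= j -> oapp f i <= oapp f j.
Proof. by move: i j; apply/monobP; case: f. Qed.

Lemma ohom_ext m n (f g : ohom m n) : (forall i, oapp f i = oapp g i) -> f = g.
Proof. by move=> H; apply: val_inj; apply/ffunP => i; apply: H. Qed.

Definition mkohom m n (h : 'I_m.+1 -> 'I_n.+1)
  (hm : forall i j : 'I_m.+1, i <= j -> h i <= h j) : ohom m n.
Proof.
exists [ffun i => h i]; apply/monobP => i j hij; rewrite !ffunE; exact: hm.
Defined.

Lemma mkohomE m n h hm i : oapp (@mkohom m n h hm) i = h i.
Proof. by rewrite /oapp /= ffunE. Qed.

Definition idh n : ohom n n := @mkohom n n id (fun i j h => h).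

Definition ocomp l m n (g : ohom m n) (f : ohom l m) : ohom l n :=
  @mkohom l n (fun i => oapp g (oapp f i))
    (fun i j h => oapp_mono g (oapp_mono f h)).

Definition cst m n (j : 'I_n.+1) : ohom m n :=
  @mkohom m n (fun _ => j) (fun i i' _ => leqnn j).

Record sSet := SSet {
  sob :> nat -> Type;
  sact : forall m n, ohom m n -> sob n -> sob m;
  sact_id : forall n (x : sob n), sact (idh n) x = x;
  sact_comp : forall l m n (g : ohom m n) (f : ohom l m) (x : sob n),
      sact (ocomp g f) x = sact f (sact g x)
}.
Arguments sact {s m n} f x.

Unset Implicit Arguments.
Record sMap (X Y : sSet) := SMap {
  smap :> forall n, X n -> Y n;
  smap_nat : forall m n (f : ohom m n) (x : X n),
      smap m (sact f x) = sact f (smap n x)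
}.
Set Implicit Arguments.
Arguments smap {X Y} s n x.
Arguments smap_nat {X Y} s {m n} f x.

Definition Delta (n : nat) : sSet.
Proof.
refine (@SSet (fun m => ohom m n) (fun m k f g => ocomp g f) _ _).
- by move=> k g; apply: ohom_ext => i; rewrite /ocomp mkohomE /idh mkohomE.
- by move=> l m k g f h; apply: ohom_ext => i; rewrite !mkohomE.
Defined.

Definition yon (X : sSet) n (x : X n) : sMap (Delta n) X.
Proof.
refine (@SMap (Delta n) X (fun m f => sact f x) _).
by move=> m k f g /=; rewrite sact_comp.
Defined.

Lemma sig_extP (A : Type) (P : A -> Prop) (a b : {x | P x}) :
  proj1_sig a = proj1_sig b -> a = b.
Proof.
case: a b => [a ha] [b hb] /= e; subst b.
by rewrite (proof_irrelevance _ ha hb).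
Qed.

Definition subclosed (X : sSet) (P : forall n, X n -> Prop) :=
  forall m n (f : ohom m n) (x : X n), P n x -> P m (sact f x).

Definition subS (X : sSet) (P : forall n, X n -> Prop) (HP : subclosed P) : sSet.
Proof.
refine (@SSet (fun n => {x : X n | P n x})
  (fun m n f x => exist _ (sact f (proj1_sig x)) (HP m n f _ (proj2_sig x))) _ _).
- by move=> n x; apply: sig_extP; rewrite /= sact_id.
- by move=> l m n g f x; apply: sig_extP; rewrite /= sact_comp.
Defined.

Definition incl (X : sSet) P (HP : subclosed P) : sMap (@subS X P HP) X.
Proof. by refine (@SMap (subS HP) X (fun n x => proj1_sig x) _). Defined.

Definition prodS (X Y : sSet) : sSet.
Proof.
refine (@SSet (fun n => (X n * Y n)%type)
  (fun m n f w => (sact f w.1, sact f w.2)) _ _).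
- by move=> n [x y]; rewrite /= !sact_id.
- by move=> l m n g f [x y]; rewrite /= !sact_comp.
Defined.

Definition pb_pred (X Y Z : sSet) (f : sMap X Z) (g : sMap Y Z) :
  forall n, prodS X Y n -> Prop := fun n w => f n w.1 = g n w.2.

Lemma pb_closed (X Y Z : sSet) (f : sMap X Z) (g : sMap Y Z) : subclosed (pb_pred f g).
Proof. by move=> m n a [x y]; rewrite /pb_pred /= !smap_nat => ->. Qed.

Definition pullback (X Y Z : sSet) (f : sMap X Z) (g : sMap Y Z) : sSet :=
  subS (@pb_closed X Y Z f g).

Definition horn_pred n (k : 'I_n.+1) : forall m, Delta n m -> Prop :=
  fun m f => exists j : 'I_n.+1, j != k /\ forall i, oapp f i != j.

Lemma horn_closed n (k : 'I_n.+1) : subclosed (horn_pred k).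
Proof.
move=> m l f g [j [hjk hj]]; exists j; split => // i.
by rewrite /= /ocomp mkohomE.
Qed.

Definition Horn n (k : 'I_n.+1) : sSet := subS (@horn_closed n k).

Definition horn_incl n (k : 'I_n.+1) : sMap (Horn k) (Delta n) := incl (@horn_closed n k).

Definition right_fibration (X Y : sSet) (p : sMap X Y) : Prop :=
  forall n (k : 'I_n.+1), 1 <= n -> 0 < k ->
  forall (a : sMap (Horn k) X) (b : sMap (Delta n) Y),
    (forall m w, p m (a m w) = b m (horn_incl k m w)) ->
    exists l : sMap (Delta n) X,
      (forall m w, l m (horn_incl k m w) = a m w) /\
      (forall m s, p m (l m s) = b m s).

Definition vtx0 n : ohom 0 n := @cst 0 n ord0.

Definition d0 n : ohom n n.+1.
Proof.
refine (@mkohom n n.+1 (fun i => lift ord0 i) _).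
by move=> i j hij; rewrite /= /bump /=.
Defined.

Definition bar_fun m n (f : ohom m n) (i : 'I_m.+2) : 'I_n.+2 :=
  if unlift ord0 i is Some j then lift ord0 (oapp f j) else ord0.

Lemma bar_fun_mono m n (f : ohom m n) (i j : 'I_m.+2) :
  i <= j -> bar_fun f i <= bar_fun f j.
Proof.
rewrite /bar_fun.
case: (unliftP ord0 i) => [i'|] ->; case: (unliftP ord0 j) => [j'|] -> //=.
- by rewrite /bump /= !add1n ltnS => h; apply: oapp_mono.
Qed.

Definition bar m n (f : ohom m n) : ohom m.+1 n.+1 :=
  @mkohom m.+1 n.+1 (bar_fun f) (@bar_fun_mono m n f).

Lemma bar_id n : bar (idh n) = idh n.+1.
Proof.
apply: ohom_ext => i; rewrite !mkohomE /bar_fun.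
by case: (unliftP ord0 i) => [i'|] ->; rewrite ?mkohomE.
Qed.

Lemma bar_comp l m n (g : ohom m n) (f : ohom l m) :
  bar (ocomp g f) = ocomp (bar g) (bar f).
Proof.
apply: ohom_ext => i; rewrite !mkohomE /bar_fun.
case: (unliftP ord0 i) => [i' ei|ei]; rewrite ?liftK ?mkohomE //.
by rewrite unlift_none.
Qed.

Lemma bar_vtx0 m n (f : ohom m n) : ocomp (bar f) (vtx0 m.+1) = vtx0 n.+1.
Proof. by apply: ohom_ext => i; rewrite !mkohomE /bar_fun unlift_none. Qed.

Lemma bar_d0 m n (f : ohom m n) : ocomp (bar f) (d0 m) = ocomp (d0 n) f.
Proof. by apply: ohom_ext => i; rewrite !mkohomE /bar_fun liftK. Qed.

Lemma ohom00 (f : ohom 0 0) : f = idh 0.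
Proof. by apply: ohom_ext => i; rewrite !ord1. Qed.

Definition shiftS (Y : sSet) : sSet.
Proof.
refine (@SSet (fun n => Y n.+1) (fun m n f z => sact (bar f) z) _ _).
- by move=> n z; rewrite bar_id sact_id.
- by move=> l m n g f z; rewrite bar_comp sact_comp.
Defined.

Definition path_pred (Y : sSet) (y : Y 0) : forall n, shiftS Y n -> Prop :=
  fun n z => sact (vtx0 n.+1) (z : Y n.+1) = y.

Lemma path_closed (Y : sSet) (y : Y 0) : subclosed (path_pred y).
Proof.
move=> m n f z; rewrite /path_pred /= -sact_comp.
by rewrite bar_vtx0.
Qed.

Definition PathS (Y : sSet) (y : Y 0) : sSet := subS (@path_closed Y y).

Definition jbar (Y : sSet) (y : Y 0) : sMap (PathS y) Y.
Proof.
refine (@SMap (PathS y) Y (fun n z => sact (d0 n) (proj1_sig z : Y n.+1)) _).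
by move=> m n f [z hz] /=; rewrite -[LHS]sact_comp -[RHS]sact_comp bar_d0.
Defined.

Definition pstar (Y : sSet) (y : Y 0) : PathS y 0.
Proof.
exists (sact (@cst 1 0 ord0) y).
by rewrite /path_pred -[LHS]sact_comp (ohom00 (ocomp _ _)) sact_id.
Defined.

Lemma jbar_pstar (Y : sSet) (y : Y 0) : jbar y 0 (pstar y) = y.
Proof. by rewrite /= -[LHS]sact_comp (ohom00 (ocomp _ _)) sact_id. Qed.

Definition Fibre (X Y : sSet) (p : sMap X Y) (y : Y 0) : sSet :=
  pullback p (yon y).

Definition Ppath (X Y : sSet) (p : sMap X Y) (y : Y 0) : sSet :=
  pullback p (jbar y).

Lemma fib_incl_pb (X Y : sSet) (p : sMap X Y) (y : Y 0) n (w : Fibre p y n) :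
  pb_pred p (jbar y) ((proj1_sig w).1, yon (pstar y) n (proj1_sig w).2).
Proof.
case: w => [[x t] h]; rewrite /pb_pred /= in h *.
rewrite h -!sact_comp; congr (sact _ y).
by apply: ohom_ext => i; rewrite !mkohomE /bar_fun ?liftK ?mkohomE !ord1.
Qed.

Definition fib_incl (X Y : sSet) (p : sMap X Y) (y : Y 0) :
  sMap (Fibre p y) (Ppath p y).
Proof.
refine (@SMap (Fibre p y) (Ppath p y)
  (fun n w => exist _ _ (fib_incl_pb w)) _).
move=> m n f [[x t] h]; apply: sig_extP => /=; congr pair.
by apply: sig_extP => /=; rewrite bar_comp sact_comp.
Defined.


Definition is_deformation_retract (A B : sSet) (i : sMap A B) : Prop :=
  exists (r : sMap B A) (H : sMap (prodS B (Delta 1)) B),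
    [/\ (forall n (a : A n), r n (i n a) = a),
        (forall n (b : B n), H n (b, @cst n 1 ord0) = i n (r n b)) &
        (forall n (b : B n), H n (b, @cst n 1 ord_max) = b)].

(* Main.v *)
Require Import Defs.
From mathcomp Require Import all_boot zify.
From Stdlib Require Import ProofIrrelevance Classical ClassicalEpsilon FunctionalExtensionality.
Require Import Defs.

Set Implicit Arguments.
Unset Strict Implicit.
Unset Printing Implicit Defensive.


Definition surj m n (g : ohom m n) := forall j : 'I_n.+1, exists i : 'I_m.+1, oapp g i = j.

Definition coface n (j : 'I_n.+2) : ohom n n.+1.
Proof.
refine (@mkohom n n.+1 (fun i => lift j i) _).
move=> i i' h /=; rewrite /bump; case: (leqP j i) => h1; case: (leqP j i') => h2 /=; lia.
Defined.

Lemma coface_miss n (j : 'I_n.+2) i : oapp (coface j) i != j.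
Proof. by rewrite mkohomE eq_sym neq_lift. Qed.

Lemma oappC m n (f : ohom m n) i : oapp f i = val f i.
Proof. by []. Qed.

Lemma ocompE l m n (g : ohom m n) (f : ohom l m) i : oapp (ocomp g f) i = oapp g (oapp f i).
Proof. by rewrite mkohomE. Qed.

Lemma idhE n i : oapp (idh n) i = i.
Proof. by rewrite mkohomE. Qed.

Lemma ocomp_id_l m n (f : ohom m n) : ocomp (idh n) f = f.
Proof. by apply: ohom_ext => i; rewrite ocompE idhE. Qed.

Lemma ocomp_id_r m n (f : ohom m n) : ocomp f (idh m) = f.
Proof. by apply: ohom_ext => i; rewrite ocompE idhE. Qed.

Lemma ocompA k l m n (h : ohom m n) (g : ohom l m) (f : ohom k l) :
  ocomp h (ocomp g f) = ocomp (ocomp h g) f.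
Proof. by apply: ohom_ext => i; rewrite !ocompE. Qed.

Lemma surj0 m (g : ohom m 0) : surj g.
Proof. by move=> j; exists ord0; rewrite !ord1. Qed.

Lemma factor_nonsurj m n (g : ohom m n.+1) :
  ~ surj g -> exists (j : 'I_n.+2) (g' : ohom m n), g = ocomp (coface j) g'.
Proof.
move=> ns.
have [j hj] : exists j, forall i, oapp g i != j.
  apply: NNPP => H; apply: ns => j; apply: NNPP => H2; apply: H; exists j => i.
  by apply/eqP => e; apply: H2; exists i.
have hb : forall i : 'I_m.+1, unbump j (oapp g i) < n.+1.
  move=> i; have := hj i; have := ltn_ord (oapp g i); have := ltn_ord j.
  rewrite /unbump; move=> h1 h2 /eqP h3.
  have h3' : (nat_of_ord (oapp g i)) <> (nat_of_ord j) by move=> e; apply: h3; apply: val_inj.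
  case: (ltnP j (oapp g i)) => h4 /=; lia.
have mono : forall i i' : 'I_m.+1, i <= i' ->
   (Ordinal (hb i) : 'I_n.+1) <= (Ordinal (hb i')).
  move=> i i' hii /=; have := oapp_mono g hii; rewrite /unbump.
  case: (ltnP j (oapp g i)); case: (ltnP j (oapp g i')) => /=; lia.
exists j, (mkohom mono); apply: ohom_ext => i; rewrite ocompE !mkohomE.
apply: val_inj => /=; rewrite unbumpKcond.
have : (oapp g i == j :> nat) = false.
  by apply/negbTE; apply: contra (hj i) => /eqP e; apply/eqP/val_inj.
by move=> ->.
Qed.

Lemma surj_self_id k (u : ohom k k) : surj u -> u = idh k.
Proof.
move=> su.
have up : forall i : 'I_k.+1, oapp u i <= i.
  case=> i hi; elim: i hi => [|i IH] hi.
    have [i0 hi0] := su ord0.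
    have := oapp_mono u (leq0n i0 : (Ordinal hi : 'I_k.+1) <= i0).
    by rewrite hi0 /=; (simpl in *; lia).
  apply/negP => /negP; rewrite -ltnNge => hlt.
  have hi' : i < k.+1 by (simpl in *; lia).
  have hv : i.+1 < k.+1 by [].
  have [i1 hi1] := su (Ordinal hv).
  have : (i1 : nat) <= i.
    apply/negP => /negP; rewrite -ltnNge => h.
    have := oapp_mono u (h : (Ordinal hi : 'I_k.+1) <= i1).
    rewrite hi1 /=. simpl in *; (simpl in *; lia).
  move=> hle; have := oapp_mono u (hle : i1 <= (Ordinal hi' : 'I_k.+1)).
  have := IH hi'; rewrite hi1 /=; (simpl in *; lia).
have lo : forall i : 'I_k.+1, i <= oapp u i.
  suff H : forall d i (hi : i < k.+1), k - i = d -> i <= oapp u (Ordinal hi).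
    by case=> i hi; apply: (H (k - i)).
  elim=> [|d IH] i hi hd.
    have [i0 hi0] := su (Ordinal hi).
    have h0 : (i0 : nat) <= i by have := ltn_ord i0; lia.
    have := oapp_mono u (h0 : i0 <= (Ordinal hi : 'I_k.+1)).
    rewrite hi0 /=; have := up (Ordinal hi); simpl in *; lia.
  have hi' : i.+1 < k.+1 by (simpl in *; lia).
  have := IH _ hi' (ltac:(lia)) => h1.
  apply/negP => /negP; rewrite -ltnNge => hlt.
  have [i1 hi1] := su (Ordinal hi).
  case: (leqP i1 i) => h.
    have := oapp_mono u (h : i1 <= (Ordinal hi : 'I_k.+1)); rewrite hi1 /=; (simpl in *; lia).
  have := oapp_mono u (h : (Ordinal hi' : 'I_k.+1) <= i1); rewrite hi1 /=; (simpl in *; lia).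
apply: ohom_ext => i; rewrite idhE; apply: val_inj => /=.
by apply/eqP; rewrite eqn_leq up lo.
Qed.

Lemma section_ex n k (s : ohom n k) (i : 'I_n.+1) : surj s ->
  exists d : ohom k n, ocomp s d = idh k /\ oapp d (oapp s i) = i.
Proof.
move=> ss.
pose d0 := fun j : 'I_k.+1 =>
  if j == oapp s i then i else odflt i [pick i' | oapp s i' == j].
have hd : forall j, oapp s (d0 j) = j.
  move=> j; rewrite /d0; case: eqP => [-> //|_].
  case: pickP => [i' /eqP //|H]; have [i' hi'] := ss j.
  by move: (H i'); rewrite hi' eqxx.
have mono : forall j j' : 'I_k.+1, j <= j' -> d0 j <= d0 j'.
  move=> j j' hj; apply/negP => /negP; rewrite -ltnNge => hlt.
  have := oapp_mono s (ltnW hlt); rewrite !hd => h.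
  have e : j = j' by apply: val_inj; apply/eqP; rewrite eqn_leq hj h.
  by subst j'; rewrite ltnn in hlt.
exists (mkohom mono); split.
  by apply: ohom_ext => j; rewrite ocompE mkohomE idhE hd.
by rewrite mkohomE /d0 eqxx.
Qed.

Lemma surj_comp l m n (g : ohom m n) (f : ohom l m) : surj g -> surj f -> surj (ocomp g f).
Proof.
move=> sg sf j; have [i hi] := sg j; have [i' hi'] := sf i.
by exists i'; rewrite ocompE hi' hi.
Qed.

Lemma surj_id n : surj (idh n).
Proof. by move=> j; exists j; rewrite idhE. Qed.


Section Prism.
Variable n : nat.

Definition sig1_fun (j : 'I_n.+1) (k : 'I_n.+2) : 'I_n.+1 :=
  inord (if k <= j then (k : nat) else k.-1).

Lemma sig1_val j k : (sig1_fun j k : nat) = if k <= j then (k : nat) else k.-1.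
Proof.
rewrite /sig1_fun inordK //; have := ltn_ord j; have := ltn_ord k.
case: ifP => h; lia.
Qed.

Definition sig1 (j : 'I_n.+1) : ohom n.+1 n.
Proof.
refine (@mkohom n.+1 n (sig1_fun j) _).
move=> i i' h; rewrite !sig1_val; case: ifP; case: ifP => /=; lia.
Defined.

Lemma sig1E j k : (oapp (sig1 j) k : nat) = if k <= j then (k : nat) else k.-1.
Proof. by rewrite mkohomE sig1_val. Qed.

Definition sig2_fun (j : 'I_n.+1) (k : 'I_n.+2) : 'I_2 :=
  if k <= j then ord0 else ord_max.

Definition sig2 (j : 'I_n.+1) : ohom n.+1 1.
Proof.
refine (@mkohom n.+1 1 (sig2_fun j) _).
move=> i i' h; rewrite /sig2_fun; case: ifP; case: ifP => //=; lia.
Defined.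

Lemma sig2E j k : (oapp (sig2 j) k : nat) = if k <= j then 0 else 1.
Proof. by rewrite mkohomE /sig2_fun; case: ifP. Qed.

Lemma a01 m (a : ohom m 1) i : (oapp a i : nat) = 0 \/ (oapp a i : nat) = 1.
Proof. have := ltn_ord (oapp a i); lia. Qed.

Definition hfac_fun m (g : ohom m n) (a : ohom m 1) (i : 'I_m.+1) : 'I_n.+2 :=
  inord (if (oapp a i : nat) == 0 then (oapp g i : nat) else (oapp g i).+1).

Lemma hfac_val m g a i : (@hfac_fun m g a i : nat) =
   if (oapp a i : nat) == 0 then (oapp g i : nat) else (oapp g i).+1.
Proof. rewrite /hfac_fun inordK //; have := ltn_ord (oapp g i); case: ifP => _; lia. Qed.

Definition hfac m (g : ohom m n) (a : ohom m 1) : ohom m n.+1.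
Proof.
refine (@mkohom m n.+1 (hfac_fun g a) _).
move=> i i' h; rewrite !hfac_val; have := oapp_mono g h; have := oapp_mono a h.
have := a01 a i; have := a01 a i'.
case: eqP; case: eqP => /=; lia.
Defined.

Lemma hfacE m g a i : (oapp (@hfac m g a) i : nat) =
   if (oapp a i : nat) == 0 then (oapp g i : nat) else (oapp g i).+1.
Proof. by rewrite mkohomE hfac_val. Qed.

Definition insig (l : nat) m (g : ohom m n) (a : ohom m 1) : Prop :=
  forall i, ((oapp a i : nat) = 0 -> oapp g i <= l) /\ ((oapp a i : nat) = 1 -> l <= oapp g i).

Definition Dom m (g : ohom m n) (a : ohom m 1) : Prop :=
  ~ surj g \/ a = @cst m 1 ord_max.

Definition Domj (j : nat) m (g : ohom m n) (a : ohom m 1) : Prop :=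
  Dom g a \/ exists l, l < j /\ insig l g a.

Lemma hfac_sig (j : 'I_n.+1) m g a : insig j g a ->
  ocomp (sig1 j) (@hfac m g a) = g /\ ocomp (sig2 j) (hfac g a) = a.
Proof.
move=> hi; split; apply: ohom_ext => i; rewrite ocompE; apply: val_inj => /=.
  rewrite sig1E hfacE; have [h1 h2] := hi i; have := a01 a i.
  case=> e; rewrite e /=; [rewrite ifT; lia | rewrite ifF; lia].
rewrite sig2E hfacE; have [h1 h2] := hi i; have := a01 a i.
case=> e; rewrite e /=; [rewrite ifT; lia | rewrite ifF; lia].
Qed.

Lemma hfac_comp m m' (f : ohom m' m) g a :
  hfac (ocomp g f) (ocomp a f) = ocomp (hfac g a) f.
Proof.
apply: ohom_ext => i; apply: val_inj => /=.
by rewrite ocompE !hfacE !ocompE.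
Qed.

Lemma insig_comp l m m' (f : ohom m' m) g a :
  insig l g a -> insig l (ocomp g f) (ocomp a f).
Proof. by move=> h i; rewrite !ocompE; apply: h. Qed.

Lemma nsurj_comp m m' (f : ohom m' m) (g : ohom m n) : ~ surj g -> ~ surj (ocomp g f).
Proof.
move=> ns sc; apply: ns => j; have [i hi] := sc j; exists (oapp f i).
by rewrite -ocompE.
Qed.

Lemma Dom_comp m m' (f : ohom m' m) g a : Dom g a -> Dom (ocomp g f) (ocomp a f).
Proof.
case=> [h|->]; [left; exact: nsurj_comp|right].
by apply: ohom_ext => i; rewrite ocompE !mkohomE.
Qed.

Lemma Domj_comp j m m' (f : ohom m' m) g a : Domj j g a -> Domj j (ocomp g f) (ocomp a f).
Proof.
case=> [h|[l [hl h]]]; [left; exact: Dom_comp|right].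
by exists l; split => //; apply: insig_comp.
Qed.

Lemma Domj_mono j j' m (g : ohom m n) a : j <= j' -> Domj j g a -> Domj j' g a.
Proof. move=> hj [h|[l [hl h]]]; [by left|right]; exists l; split => //; lia. Qed.

Lemma insig_all m (g : ohom m n) (a : ohom m 1) : exists l, l <= n /\ insig l g a.
Proof.
exists (\max_(i | (oapp a i : nat) == 0) (oapp g i : nat)); split.
  by apply/bigmax_leqP => i _; have := ltn_ord (oapp g i); lia.
move=> i; split => e.
  by apply: (@leq_bigmax_cond _ (fun i => (oapp a i : nat) == 0) (fun i => (oapp g i : nat))); apply/eqP.
apply/bigmax_leqP => i' /eqP e'.
case: (leqP i i') => h.
  have := oapp_mono a h; lia.
by apply: oapp_mono; apply: ltnW.
Qed.

Lemma horn_Domj (j : 'I_n.+1) m (f : ohom m n.+1) (v : 'I_n.+2) :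
  (v : nat) <> j.+1 -> (forall i, oapp f i != v) ->
  Domj j (ocomp (sig1 j) f) (ocomp (sig2 j) f).
Proof.
move=> hv hf.
have hf' : forall i, (oapp f i : nat) <> v.
  by move=> i e; move: (hf i); rewrite (_ : oapp f i = v) ?eqxx //; apply: val_inj.
have hvn := ltn_ord v; have hjn := ltn_ord j.
case: (ltngtP v j) => hvj.
- left; left => sg.
  have hv' : (v : nat) < n.+1 by lia.
  have [i hi] := sg (Ordinal hv').
  have := hf' i; have := congr1 val hi; rewrite /= ocompE sig1E.
  case: ifP => ? ? ?; lia.
- case: (ltnP j.+1 v) => hvj1; last by exfalso; lia.
  left; left => sg.
  have hv' : (v : nat).-1 < n.+1 by lia.
  have [i hi] := sg (Ordinal hv').
  have := hf' i; have := congr1 val hi; rewrite /= ocompE sig1E.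
  case: ifP => ? ? ?; lia.
- case: (posnP j) => hj0.
    left; right; apply: ohom_ext => i; apply: val_inj => /=; rewrite ocompE sig2E /cst mkohomE /=.
    have := hf' i; case: ifP => ? ?; lia.
  right; exists (j.-1); split; first lia.
  move=> i; rewrite !ocompE sig1E sig2E; have := hf' i.
  case: ifP => ? ?; split; lia.
Qed.

Lemma Domj_horn (j : 'I_n.+1) m (k : ohom m n.+1) :
  Domj j (ocomp (sig1 j) k) (ocomp (sig2 j) k) ->
  exists v : 'I_n.+2, (v : nat) <> j.+1 /\ forall i, oapp k i != v.
Proof.
move=> hd; apply: NNPP => H.
have hit : forall v : 'I_n.+2, (v : nat) <> j.+1 -> exists i, (oapp k i : nat) = v.
  move=> v hv; apply: NNPP => H2; apply: H; exists v; split => // i.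
  by apply/eqP => e; apply: H2; exists i; rewrite e.
have hjn := ltn_ord j.
case: hd => [[ns|ea]|[l [hl hs]]].
- apply: ns => w.
  case: (leqP w j) => hw.
    have hw' : (w : nat) < n.+2 by lia.
    have [i hi] := hit (Ordinal hw') ltac:(simpl; lia).
    exists i; apply: val_inj => /=; rewrite ocompE sig1E /= hi ifT //.
  have hw' : (w : nat).+1 < n.+2 by have := ltn_ord w; lia.
  have [i hi] := hit (Ordinal hw') ltac:(simpl; lia).
  exists i; apply: val_inj => /=; rewrite ocompE sig1E /= hi ifF //=; apply/negbTE; rewrite -ltnNge; lia.
- have [i hi] := hit ord0 ltac:(simpl; lia).
  have := congr1 (fun a => oapp a i : nat) ea; rewrite /= ocompE sig2E hi mkohomE /=.
  by [].
- have hw' : (j : nat) < n.+2 by lia.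
  have [i hi] := hit (Ordinal hw') ltac:(simpl; lia).
  have [h1 _] := hs i; move: h1; rewrite !ocompE sig1E sig2E /= hi /= leqnn; lia.
Qed.

End Prism.


Section Fill.
Variables (X Y : sSet) (p : sMap X Y).
Hypothesis hfib : right_fibration p.
Variable n : nat.

Definition pmap (S : sSet) := forall m, ohom m n -> ohom m 1 -> S m.

Definition nat_on (S : sSet) (P : forall m, ohom m n -> ohom m 1 -> Prop) (F : pmap S) :=
  forall m m' (f : ohom m' m) g a, P m g a ->
    F m' (ocomp g f) (ocomp a f) = sact f (F m g a).

Lemma stage (D : pmap X) (Z : pmap Y) :
  nat_on (fun _ _ _ => True) Z ->
  nat_on (@Dom n) D ->
  (forall m g a, Dom g a -> p m (D m g a) = Z m g a) ->
  forall j, j <= n.+1 -> exists F : pmap X,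
    [/\ nat_on (@Domj n j) F, (forall m g a, Dom g a -> F m g a = D m g a) &
        (forall m g a, Domj j g a -> p m (F m g a) = Z m g a)].
Proof.
move=> HZ HD HDp; elim=> [|j IH] hj.
  exists D; split.
  - by move=> m m' f g a [h|[l [hl _]]] //; apply: HD.
  - by [].
  - by move=> m g a [h|[l [hl _]]] //; apply: HDp.
have [F [HFn HFD HFp]] := IH (ltnW hj).
have hjo : j < n.+1 by [].
pose jo : 'I_n.+1 := Ordinal hjo.
have hk : j.+1 < n.+2 by [].
pose k : 'I_n.+2 := Ordinal hk.
have hornD : forall m (w : Horn k m),
    Domj j (ocomp (sig1 jo) (proj1_sig w)) (ocomp (sig2 jo) (proj1_sig w)).
  move=> m [w [v [hv hw]]] /=; apply: (@horn_Domj n jo m w v) => //.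
  by move=> e; move: hv; rewrite (_ : v = k) ?eqxx //; apply: val_inj.
pose afun := fun m (w : Horn k m) =>
  F m (ocomp (sig1 jo) (proj1_sig w)) (ocomp (sig2 jo) (proj1_sig w)).
have anat : forall m m' (f : ohom m m') (w : Horn k m'),
    afun m (sact f w) = sact f (afun m' w).
  move=> m m' f w; rewrite /afun /= !ocompA; apply: HFn; exact: hornD.
pose a := @SMap (Horn k) X afun anat.
pose bfun := fun m (s : Delta n.+1 m) => Z m (ocomp (sig1 jo) s) (ocomp (sig2 jo) s).
have bnat : forall m m' (f : ohom m m') (s : Delta n.+1 m'),
    bfun m (sact f s) = sact f (bfun m' s).
  by move=> m m' f s; rewrite /bfun /= !ocompA; apply: HZ.
pose b := @SMap (Delta n.+1) Y bfun bnat.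
have hab : forall m w, p m (a m w) = b m (horn_incl k m w).
  by move=> m w; rewrite /= /afun /bfun HFp //; apply: hornD.
have [l [l1 l2]] := hfib (isT : 1 <= n.+1) (isT : 0 < k) hab.
pose K := l n.+1 (idh n.+1).
have lK : forall m s, l m s = sact s K.
  move=> m s; rewrite /K -smap_nat /=; congr (l m _).
  by rewrite ocomp_id_l.
pose F' := fun m g a =>
  if excluded_middle_informative (Domj j g a) then F m g a else sact (@hfac n m g a) K.
have F'j : forall m g a, Domj j g a -> F' m g a = F m g a.
  by move=> m g a0 h; rewrite /F'; case: excluded_middle_informative.
have F'nj : forall m g a, ~ Domj j g a -> F' m g a = sact (@hfac n m g a) K.
  by move=> m g a0 h; rewrite /F'; case: excluded_middle_informative.
have insj : forall m (g : ohom m n) a0, Domj j.+1 g a0 -> ~ Domj j g a0 -> insig j g a0.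
  move=> m g a0 [h|[l' [hl h]]] hn; first by exfalso; apply: hn; left.
  have e : l' = j.
    case: (ltnP l' j) => hlt; first by exfalso; apply: hn; right; exists l'.
    lia.
  by rewrite -e.
have hK : forall m (h : ohom m n.+1),
    Domj j (ocomp (sig1 jo) h) (ocomp (sig2 jo) h) ->
    sact h K = F m (ocomp (sig1 jo) h) (ocomp (sig2 jo) h).
  move=> m h hd; have [v [hv hh]] := Domj_horn hd.
  have hp : horn_pred k h.
    exists v; split => //; apply/negP => /eqP e; apply: hv; by rewrite e.
  rewrite -lK; exact: (l1 m (exist _ h hp)).
exists F'; split.
- move=> m m' f g a0 hd.
  case: (excluded_middle_informative (Domj j g a0)) => hdj.
    by rewrite !F'j //; [apply: HFn | apply: Domj_comp].
  have hs := insj _ _ _ hd hdj.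
  rewrite (F'nj _ _ _ hdj) -sact_comp -hfac_comp.
  case: (excluded_middle_informative (Domj j (ocomp g f) (ocomp a0 f))) => hdj'.
    have [e1 e2] := @hfac_sig n jo _ _ _ (insig_comp f hs).
    rewrite F'j // hK; first by rewrite e1 e2.
    by rewrite e1 e2.
  by rewrite F'nj.
- move=> m g a0 hd; rewrite F'j ?HFD //; by left.
- move=> m g a0 hd.
  case: (excluded_middle_informative (Domj j g a0)) => hdj; first by rewrite F'j // HFp.
  have hs := insj _ _ _ hd hdj.
  rewrite F'nj // -smap_nat l2 /= /bfun ocomp_id_l.
  by have [-> ->] := @hfac_sig n jo _ _ _ hs.
Qed.

Lemma prism_fill (D : pmap X) (Z : pmap Y) :
  nat_on (fun _ _ _ => True) Z ->
  nat_on (@Dom n) D ->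
  (forall m g a, Dom g a -> p m (D m g a) = Z m g a) ->
  exists F : pmap X,
    [/\ nat_on (fun _ _ _ => True) F, (forall m g a, Dom g a -> F m g a = D m g a) &
        (forall m g a, p m (F m g a) = Z m g a)].
Proof.
move=> HZ HD HDp; have [F [H1 H2 H3]] := stage HZ HD HDp (leqnn n.+1).
have all : forall m (g : ohom m n) a, Domj n.+1 g a.
  move=> m g a; have [l [hl h]] := insig_all g a; right; exists l; split => //.
exists F; split => //.
- by move=> m m' f g a _; apply: H1.
- by move=> m g a; apply: H3.
Qed.

End Fill.


Section EZ.
Variable B : sSet.

Definition nondeg k (c : B k) : Prop :=
  forall k' (v : ohom k k') (c' : B k'), c = sact v c' -> k <= k'.

Lemma sactA l m n (g : ohom m n) (f : ohom l m) (x : B n) :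
  sact f (sact g x) = sact (ocomp g f) x.
Proof. by rewrite sact_comp. Qed.

Lemma nondeg_surj k (c : B k) k0 (u : ohom k k0) (c' : B k0) :
  nondeg c -> k0 <= k -> c = sact u c' -> surj u.
Proof.
move=> nd hk e; apply: NNPP => ns.
case: k0 u c' hk e ns => [|k0] u c' hk e ns; first by apply: ns; apply: surj0.
have [j [u' eu]] := factor_nonsurj ns.
have := nd _ u' (sact (coface j) c'); rewrite sactA -eu => /(_ e); lia.
Qed.

Lemma nondeg_self k (c : B k) (u : ohom k k) : nondeg c -> c = sact u c -> u = idh k.
Proof. by move=> nd e; apply: surj_self_id; apply: (nondeg_surj nd (leqnn k) e). Qed.

Lemma ez_exists n (b : B n) : exists k (s : ohom n k) (c : B k),
  [/\ surj s, nondeg c & b = sact s c].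
Proof.
suff H : forall N k (u : ohom n k) (c : B k), k <= N -> b = sact u c ->
   exists k (s : ohom n k) (c : B k), [/\ surj s, nondeg c & b = sact s c].
  by apply: (H n n (idh n) b (leqnn n)); rewrite sact_id.
elim=> [|N IH] k u c hk e.
- case: (classic (nondeg c)) => nd.
    have ek : k = 0 by lia. subst k.
    by exists 0, u, c; split => //; apply: surj0.
  exfalso; apply: nd => k' v c' _; lia.
- case: (classic (nondeg c)) => nd.
    case: (classic (surj u)) => su; first by exists k, u, c.
    case: k u c hk e nd su => [|k0] u c hk e nd su; first by exfalso; apply: su; apply: surj0.
    have [j [u' eu]] := factor_nonsurj su.
    apply: (IH k0 u' (sact (coface j) c)); first lia.
    by rewrite sactA -eu.
  have [k' [v [c' [ec hk']]]] : exists k' (v : ohom k k') (c' : B k'), c = sact v c' /\ k' < k.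
    apply: NNPP => H; apply: nd => k' v c' ec; apply: NNPP => hlt; apply: H.
    by exists k', v, c'; split => //; lia.
  apply: (IH k' (ocomp v u) c'); first lia.
  by rewrite e ec sactA.
Qed.

Lemma ez_dim n (b : B n) k (s : ohom n k) (c : B k) k' (t : ohom n k') (c' : B k') :
  surj s -> nondeg c -> b = sact s c -> surj t -> nondeg c' -> b = sact t c' -> k = k'.
Proof.
move=> ss nc ec st nc' ec'.
have [d [sd _]] := section_ex ord0 ss.
have [d' [td _]] := section_ex ord0 st.
have h1 : c = sact (ocomp t d) c'.
  by rewrite -sactA -ec' ec sactA sd sact_id.
have h2 : c' = sact (ocomp s d') c.
  by rewrite -sactA -ec ec' sactA td sact_id.
have := nc _ _ _ h1; have := nc' _ _ _ h2; lia.
Qed.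

Lemma ez_uniq n (b : B n) k (s : ohom n k) (c : B k) (t : ohom n k) (c' : B k) :
  surj s -> nondeg c -> b = sact s c -> surj t -> nondeg c' -> b = sact t c' ->
  s = t /\ c = c'.
Proof.
move=> ss nc ec st nc' ec'.
have [d [sd _]] := section_ex ord0 ss.
have [d' [td _]] := section_ex ord0 st.
have h1 : c = sact (ocomp t d) c'.
  by rewrite -sactA -ec' ec sactA sd sact_id.
have h2 : c' = sact (ocomp s d') c.
  by rewrite -sactA -ec ec' sactA td sact_id.
have h3 : c = sact (ocomp (ocomp s d') (ocomp t d)) c.
  by rewrite -sactA -h2 -h1.
have e3 := nondeg_self nc h3.
have su : surj (ocomp s d').
  move=> j; exists (oapp (ocomp t d) j).
  by rewrite -ocompE e3 idhE.
have e4 := surj_self_id su.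
have e5 : ocomp t d = idh k by rewrite -e3 e4 ocomp_id_l.
have ecc : c = c' by rewrite h1 e5 sact_id.
rewrite -ecc in ec' *; split => //.
apply: ohom_ext => i.
have [d2 [sd2 hd2]] := section_ex i ss.
have h4 : c = sact (ocomp t d2) c by rewrite -sactA -ec' ec sactA sd2 sact_id.
have e6 := nondeg_self nc h4.
by rewrite -{2}hd2 -ocompE e6 idhE.
Qed.

End EZ.


Lemma ohom0_uniq m (f g : ohom m 0) : f = g.
Proof. by apply: ohom_ext => i; rewrite !ord1. Qed.

Lemma a_nz m (a : ohom m 1) (i i' : 'I_m.+1) : i <= i' -> oapp a i <> ord0 -> oapp a i' <> ord0.
Proof.
move=> h ne e; apply: ne; apply: val_inj => /=; have := oapp_mono a h; rewrite e /=; lia.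
Qed.

Definition psi m n (g : ohom m n) (a : ohom m 1) : ohom m n.+1.
Proof.
refine (@mkohom m n.+1 (fun i => if oapp a i == ord0 then ord0 else lift ord0 (oapp g i)) _).
move=> i i' h; case: eqP => [_|ne] //=.
rewrite ifF; last by apply/eqP; exact: (a_nz h ne).
by rewrite /bump /= !add1n ltnS; apply: oapp_mono.
Defined.

Lemma psiE m n (g : ohom m n) a i :
  oapp (psi g a) i = if oapp a i == ord0 then ord0 else lift ord0 (oapp g i).
Proof. by rewrite mkohomE. Qed.

Definition phibar_fun m (a : ohom m 1) (i : 'I_m.+2) : 'I_m.+2 :=
  if unlift ord0 i is Some j then (if oapp a j == ord0 then ord0 else i) else ord0.

Lemma phibar_mono m (a : ohom m 1) (i j : 'I_m.+2) : i <= j -> phibar_fun a i <= phibar_fun a j.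
Proof.
rewrite /phibar_fun.
case: (unliftP ord0 i) => [i'|] ->; case: (unliftP ord0 j) => [j'|] -> //=.
rewrite /bump /= !add1n ltnS => h.
case: eqP => [_|ne] //=.
by rewrite ifF //; apply/eqP; exact: (a_nz h ne).
Qed.

Definition phibar m (a : ohom m 1) : ohom m.+1 m.+1 :=
  @mkohom m.+1 m.+1 (phibar_fun a) (@phibar_mono m a).

Lemma phibar0 m (a : ohom m 1) : oapp (phibar a) ord0 = ord0.
Proof. by rewrite mkohomE /phibar_fun unlift_none. Qed.

Lemma phibarS m (a : ohom m 1) j :
  oapp (phibar a) (lift ord0 j) = if oapp a j == ord0 then ord0 else lift ord0 j.
Proof. by rewrite mkohomE /phibar_fun liftK. Qed.

Lemma bar0 m n (f : ohom m n) : oapp (bar f) ord0 = ord0.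
Proof. by rewrite mkohomE /bar_fun unlift_none. Qed.

Lemma barS m n (f : ohom m n) j : oapp (bar f) (lift ord0 j) = lift ord0 (oapp f j).
Proof. by rewrite mkohomE /bar_fun liftK. Qed.

Lemma d0E n i : oapp (d0 n) i = lift ord0 i.
Proof. by rewrite mkohomE. Qed.

Lemma vtx0E n i : oapp (vtx0 n) i = ord0.
Proof. by rewrite mkohomE. Qed.

Lemma cstE m n (j : 'I_n.+1) i : oapp (@cst m n j) i = j.
Proof. by rewrite mkohomE. Qed.

Lemma ext2 m n (f g : ohom m.+1 n) :
  oapp f ord0 = oapp g ord0 -> (forall j, oapp f (lift ord0 j) = oapp g (lift ord0 j)) -> f = g.
Proof.
move=> h0 hS; apply: ohom_ext => i; case: (unliftP ord0 i) => [j|] ->; by [apply: hS|].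
Qed.

Lemma I1 k m m' (t : ohom m k) (h : ohom m' m) a :
  ocomp (bar t) (psi h a) = psi (ocomp t h) a.
Proof.
apply: ohom_ext => i; rewrite ocompE !psiE; case: eqP => _; first by rewrite bar0.
by rewrite barS ocompE.
Qed.

Lemma I2 m m' n (f : ohom m' m) (g : ohom m n) a :
  psi (ocomp g f) (ocomp a f) = ocomp (psi g a) f.
Proof. by apply: ohom_ext => i; rewrite ocompE !psiE !ocompE. Qed.

Lemma I3 m n (g : ohom m n) : psi g (@cst m 1 ord_max) = ocomp (d0 n) g.
Proof. by apply: ohom_ext => i; rewrite ocompE psiE cstE d0E. Qed.

Lemma I4 m (a : ohom m 1) : psi (idh m) a = ocomp (phibar a) (d0 m).
Proof. apply: ohom_ext => i; rewrite ocompE psiE d0E phibarS idhE; by case: eqP. Qed.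

Lemma I5 m (a : ohom m 1) : ocomp (phibar a) (vtx0 m.+1) = vtx0 m.+1.
Proof. by apply: ohom_ext => i; rewrite ocompE !vtx0E phibar0. Qed.

Lemma I6 m m' (f : ohom m' m) (a : ohom m 1) :
  ocomp (bar f) (phibar (ocomp a f)) = ocomp (phibar a) (bar f).
Proof.
apply: ext2; first by rewrite !ocompE phibar0 !bar0 phibar0.
move=> j; rewrite !ocompE phibarS barS phibarS ocompE.
by case: eqP => _; [rewrite bar0 | rewrite barS].
Qed.

Lemma I7 m : phibar (@cst m 1 ord_max) = idh m.+1.
Proof.
apply: ext2; first by rewrite phibar0 idhE.
by move=> j; rewrite phibarS cstE idhE.
Qed.

Lemma I8 m n (g : ohom m n) : psi g (@cst m 1 ord0) = ocomp (vtx0 n.+1) (@cst m 0 ord0).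
Proof. by apply: ohom_ext => i; rewrite ocompE psiE cstE vtx0E eqxx. Qed.

Lemma I9 m : phibar (@cst m 1 ord0) = ocomp (vtx0 m.+1) (@cst m.+1 0 ord0).
Proof.
apply: ext2; first by rewrite phibar0 ocompE vtx0E.
by move=> j; rewrite phibarS cstE ocompE vtx0E.
Qed.


Section Main.
Variables (X Y : sSet) (p : sMap X Y) (y : Y 0).
Hypothesis hfib : right_fibration p.

Definition BB := Ppath p y.

Definition bx m (b : BB m) : X m := (proj1_sig b).1.
Definition bz m (b : BB m) : Y m.+1 := proj1_sig (proj1_sig b).2.

Lemma bxA m m' (f : ohom m' m) (b : BB m) : bx (sact f b) = sact f (bx b).
Proof. by []. Qed.
Lemma bzA m m' (f : ohom m' m) (b : BB m) : bz (sact f b) = sact (bar f) (bz b).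
Proof. by []. Qed.
Lemma bpb m (b : BB m) : p m (bx b) = sact (d0 m) (bz b).
Proof. exact: (proj2_sig b). Qed.
Lemma bpath m (b : BB m) : sact (vtx0 m.+1) (bz b) = y.
Proof. exact: (proj2_sig (proj1_sig b).2). Qed.

Definition inA m (b : BB m) : Prop := bz b = sact (@cst m.+1 0 ord0) y.

Lemma inA_closed m m' (f : ohom m' m) (b : BB m) : inA b -> inA (sact f b).
Proof. by rewrite /inA bzA => ->; rewrite -sact_comp (ohom0_uniq (ocomp _ _) (@cst m'.+1 0 ord0)). Qed.

Definition pm k := pmap k X.

Lemma ez_ex' m (b : BB m) : exists t : {k : nat & (ohom m k * BB k)%type},
  [/\ surj (projT2 t).1, nondeg (projT2 t).2 & b = sact (projT2 t).1 (projT2 t).2].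
Proof.
have [k [s [c [h1 h2 h3]]]] := ez_exists b.
by exists (existT _ k (s, c)).
Qed.

Definition ez_sig m (b : BB m) := constructive_indefinite_description _ (ez_ex' b).
Definition ezk m (b : BB m) : nat := projT1 (proj1_sig (ez_sig b)).
Definition ezt m (b : BB m) : ohom m (ezk b) := (projT2 (proj1_sig (ez_sig b))).1.
Definition ezc m (b : BB m) : BB (ezk b) := (projT2 (proj1_sig (ez_sig b))).2.
Lemma ez_prop m (b : BB m) : [/\ surj (ezt b), nondeg (ezc b) & b = sact (ezt b) (ezc b)].
Proof. exact: (proj2_sig (ez_sig b)). Qed.

Definition PsiR n (rec : forall k, (k < n)%coq_nat -> BB k -> pm k) m (b : BB m) : pm m :=
  fun m' g a => match Compare_dec.lt_dec (ezk b) n with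
  | left h => rec _ h (ezc b) m' (ocomp (ezt b) g) a
  | right _ => sact g (bx b) end.
Arguments PsiR [n] rec [m] b m' g a : rename.

Definition SpecF n (c : BB n) (F : pm n) : Prop :=
  [/\ nat_on (fun _ _ _ => True) F,
      (forall m g a, p m (F m g a) = sact (psi g a) (bz c)),
      (forall m g, F m g (@cst m 1 ord_max) = sact g (bx c)) &
      (inA c -> forall m g a, F m g a = sact g (bx c))].

Definition Spec n (Q : forall m, BB m -> pm m) (c : BB n) (F : pm n) : Prop :=
  SpecF c F /\ (forall m g a, ~ surj g -> F m g a = Q m (sact g c) m (idh m) a).

Definition Step n (rec : forall k, (k < n)%coq_nat -> BB k -> pm k) (c : BB n) : pm n :=
  epsilon (inhabits (fun m g a => sact g (bx c))) (Spec (PsiR rec) c).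
Arguments Step [n] rec c m g a : rename.

Definition Phi : forall n, BB n -> pm n :=
  Fix Wf_nat.lt_wf (fun n => BB n -> pm n) Step.
Arguments Phi [n] c m g a : rename.

Lemma Phi_eq n (c : BB n) : Phi c = Step (fun k _ => @Phi k) c.
Proof.
rewrite /Phi Fix_eq //.
move=> x f g H; have -> // : f = g.
by apply: functional_extensionality_dep => k; apply: functional_extensionality_dep => h.
Qed.

Definition Psi m (b : BB m) : pm m :=
  fun m' g a => Phi (ezc b) m' (ocomp (ezt b) g) a.
Arguments Psi [m] b m' g a : rename.

Lemma PsiR_Psi n m (b : BB m) m' g a : ezk b < n ->
  @PsiR n (fun k _ => @Phi k) m b m' g a = Psi b m' g a.
Proof.
move=> h; rewrite /PsiR; case: Compare_dec.lt_dec => // hn.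
by exfalso; apply: hn; apply/ltP.
Qed.

Lemma Psi_spec m (b : BB m) k (t : ohom m k) (c : BB k) :
  surj t -> nondeg c -> b = sact t c -> forall m' g a, Psi b m' g a = Phi c m' (ocomp t g) a.
Proof.
move=> st nc e m' g a; rewrite /Psi /ezk /ezt /ezc.
case: (ez_sig b) => [[k' [t' c']] /= [h1 h2 h3]].
have ek := ez_dim st nc e h1 h2 h3; subst k'.
have [-> ->] := ez_uniq st nc e h1 h2 h3.
by [].
Qed.

Lemma bx_ez m (b : BB m) : bx b = sact (ezt b) (bx (ezc b)).
Proof. have [_ _ e] := ez_prop b; exact: (congr1 (@bx m) e). Qed.
Lemma bz_ez m (b : BB m) : bz b = sact (bar (ezt b)) (bz (ezc b)).
Proof. have [_ _ e] := ez_prop b; exact: (congr1 (@bz m) e). Qed.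

Definition Good k (c : BB k) : Prop :=
  SpecF c (Phi c) /\
  (forall m (u : ohom m k) m' g a, Psi (sact u c) m' g a = Phi c m' (ocomp u g) a).

Section Derived.
Variables (m : nat) (b : BB m).
Hypothesis hg : Good (ezc b).

Lemma NatPsi m' (g : ohom m' m) m'' (h : ohom m'' m') a :
  Psi (sact g b) m'' h a = Psi b m'' (ocomp g h) a.
Proof.
have [_ _ e] := ez_prop b.
have [_ coh] := hg.
rewrite {1}e -sact_comp coh /Psi; congr Phi; by rewrite ocompA.
Qed.

Lemma PsiNat2 m' (g : ohom m' m) m'' (f : ohom m'' m') a :
  sact f (Psi b m' g a) = Psi b m'' (ocomp g f) (ocomp a f).
Proof.
have [[hn _ _ _] _] := hg.
by rewrite /Psi -hn // ocompA.
Qed.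

Lemma PsiTop m' (g : ohom m' m) : Psi b m' g (@cst m' 1 ord_max) = sact g (bx b).
Proof.
have [[_ _ ht _] _] := hg; have [_ _ e] := ez_prop b.
by rewrite /Psi ht (bx_ez b) sact_comp.
Qed.

Lemma PsiP m' (g : ohom m' m) a : p m' (Psi b m' g a) = sact (psi g a) (bz b).
Proof.
have [[_ hp _ _] _] := hg; have [_ _ e] := ez_prop b.
by rewrite /Psi hp (bz_ez b) -sact_comp I1.
Qed.

Lemma PsiA m' (g : ohom m' m) a : inA b -> Psi b m' g a = sact g (bx b).
Proof.
move=> hA; have [[_ _ _ ha] _] := hg; have [st _ e] := ez_prop b.
have [d [sd _]] := section_ex ord0 st.
have hc : inA (ezc b).
  have h := congr1 (sact d) e; rewrite -sact_comp sd sact_id in h.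
  rewrite -h.
  exact: inA_closed.
by rewrite /Psi ha // (bx_ez b) sact_comp.
Qed.

End Derived.

Lemma ezdim_le m (b : BB m) k (u : ohom m k) (c : BB k) : b = sact u c -> ezk b <= k.
Proof.
move=> e; have [st nc e'] := ez_prop b.
have [d [sd _]] := section_ex ord0 st.
apply: (nc _ (ocomp u d) c).
have h := congr1 (sact d) e'; rewrite -sact_comp sd sact_id in h.
by rewrite -h sact_comp; congr (sact d _).
Qed.

Lemma ezk_face n (c : BB n) m (g : ohom m n) : ~ surj g -> ezk (sact g c) < n.
Proof.
case: n c g => [|n] c g ns; first by exfalso; apply: ns; apply: surj0.
have [j [g' eg]] := factor_nonsurj ns.
have := @ezdim_le _ (sact g c) _ g' (sact (coface j) c).
by rewrite -sact_comp -eg => /(_ erefl); rewrite ltnS.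
Qed.

Lemma cst_comp m m' (f : ohom m' m) k (j : 'I_k.+1) : ocomp (@cst m k j) f = @cst m' k j.
Proof. by apply: ohom_ext => i; rewrite ocompE !cstE. Qed.

Lemma good_all n (c : BB n) : nondeg c -> Good c.
Proof.
elim/ltn_ind: n c => n IH c nc.
have IHb : forall m (b : BB m), ezk b < n -> Good (ezc b).
  move=> m b h; apply: IH => //; by have [] := ez_prop b.
have Gf : forall m (g : ohom m n), ~ surj g -> Good (ezc (sact g c)).
  by move=> m g ns; apply: IHb; apply: ezk_face.
have ex : exists F, Spec (@PsiR n (fun k _ => @Phi k)) c F.
  case: (classic (inA c)) => hA.
    exists (fun m g a => sact g (bx c)); split; first split.
    - by move=> m m' f g a _; rewrite sact_comp.
    - move=> m g a; rewrite smap_nat bpb hA -!sact_comp; congr (sact _ y); exact: ohom0_uniq.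
    - by [].
    - by [].
    - move=> m g a ns; rewrite PsiR_Psi ?ezk_face // (PsiA (Gf _ _ ns)).
        by rewrite sact_id.
      exact: inA_closed.
  pose D := fun m (g : ohom m n) (a : ohom m 1) =>
    if excluded_middle_informative (a = @cst m 1 ord_max) then sact g (bx c)
    else Psi (sact g c) m (idh m) a.
  pose Z := fun m (g : ohom m n) (a : ohom m 1) => sact (psi g a) (bz c).
  have HZ : nat_on (fun _ _ _ => True) (Z : pmap n Y).
    by move=> m m' f g a _; rewrite /Z I2 sact_comp.
  have hD1 : forall m (g : ohom m n) a, a = @cst m 1 ord_max -> D m g a = sact g (bx c).
    by move=> m g a ea; rewrite /D; case: excluded_middle_informative.
  have hD2 : forall m (g : ohom m n) a, a <> @cst m 1 ord_max ->
      D m g a = Psi (sact g c) m (idh m) a.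
    by move=> m g a ea; rewrite /D; case: excluded_middle_informative.
  have HD : nat_on (@Dom n) (D : pmap n X).
    move=> m m' f g a hd.
    case: (classic (a = @cst m 1 ord_max)) => ea.
      have eaf : ocomp a f = @cst m' 1 ord_max by rewrite ea cst_comp.
      by rewrite hD1 // hD1 // sact_comp.
    have ns : ~ surj g by case: hd.
    have G := Gf _ _ ns.
    rewrite (hD2 _ _ _ ea).
    case: (classic (ocomp a f = @cst m' 1 ord_max)) => eaf.
      by rewrite hD1 // (PsiNat2 G) eaf (PsiTop G) ocomp_id_l bxA sact_comp.
    by rewrite hD2 // sact_comp (NatPsi G) (PsiNat2 G) ocomp_id_l ocomp_id_r.
  have HDp : forall m g a, Dom g a -> p m (D m g a) = Z m g a.
    move=> m g a hd; rewrite /Z.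
    case: (classic (a = @cst m 1 ord_max)) => ea.
      by rewrite hD1 // ea smap_nat bpb -sact_comp I3.
    have ns : ~ surj g by case: hd.
    by rewrite hD2 // (PsiP (Gf _ _ ns)) bzA -sact_comp I1 ocomp_id_r.
  have [F [Fn FD Fp]] := prism_fill hfib HZ HD HDp.
  exists F; split; first split.
  - exact: Fn.
  - exact: Fp.
  - by move=> m g; rewrite FD ?hD1 //; right.
  - by [].
  - move=> m g a ns; rewrite FD; last by left.
    rewrite PsiR_Psi ?ezk_face //.
    case: (classic (a = @cst m 1 ord_max)) => ea; last by rewrite hD2.
    by rewrite hD1 // ea (PsiTop (Gf _ _ ns)) sact_id.
have sp : Spec (@PsiR n (fun k _ => @Phi k)) c (Phi c).
  rewrite Phi_eq /Step; exact: epsilon_spec ex.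
have [sF bd] := sp.
split => // m u m' g a.
case: (classic (surj u)) => su.
  exact: Psi_spec.
have ns : ~ surj (ocomp u g) by apply: nsurj_comp.
rewrite bd // PsiR_Psi ?ezk_face // sact_comp (NatPsi (IHb _ _ (ezk_face c su))) ocomp_id_r //.
Qed.

Lemma goodb m (b : BB m) : Good (ezc b).
Proof. apply: good_all; by have [] := ez_prop b. Qed.

Definition Ht m (b : BB m) (a : ohom m 1) : X m := Psi b m (idh m) a.

Lemma Ht_nat m m' (f : ohom m' m) (b : BB m) a :
  Ht (sact f b) (ocomp a f) = sact f (Ht b a).
Proof. by rewrite /Ht (NatPsi (goodb b)) (PsiNat2 (goodb b)) ocomp_id_l ocomp_id_r. Qed.

Lemma Ht_p m (b : BB m) a : p m (Ht b a) = sact (psi (idh m) a) (bz b).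
Proof. exact: (PsiP (goodb b)). Qed.

Lemma Ht_top m (b : BB m) : Ht b (@cst m 1 ord_max) = bx b.
Proof. by rewrite /Ht (PsiTop (goodb b)) sact_id. Qed.

Lemma Ht_A m (b : BB m) a : inA b -> Ht b a = bx b.
Proof. by move=> h; rewrite /Ht (PsiA (goodb b)) ?sact_id. Qed.

Lemma zp_prf m (b : BB m) (a : ohom m 1) :
  path_pred y (sact (phibar a) (bz b) : shiftS Y m).
Proof. by rewrite /path_pred -sact_comp I5 bpath. Qed.

Definition zp m (b : BB m) (a : ohom m 1) : PathS y m := exist _ _ (zp_prf b a).

Lemma Hb_prf m (b : BB m) (a : ohom m 1) :
  pb_pred p (jbar y) ((Ht b a, zp b a) : prodS X (PathS y) m).
Proof. by rewrite /pb_pred /= Ht_p -sact_comp I4. Qed.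

Definition Hfun m (w : prodS BB (Delta 1) m) : BB m :=
  exist _ _ (Hb_prf w.1 w.2).

Lemma Hfun_nat m' m (f : ohom m' m) (w : prodS BB (Delta 1) m) :
  Hfun (sact f w) = sact f (Hfun w).
Proof.
case: w => b a; apply: sig_extP => /=; congr pair.
  exact: Ht_nat.
apply: sig_extP => /=; rewrite -!sact_comp; congr sact; exact: I6.
Qed.

Definition Hmap : sMap (prodS BB (Delta 1)) BB := @SMap _ _ Hfun Hfun_nat.

Lemma r_prf m (b : BB m) :
  pb_pred p (yon y) ((Ht b (@cst m 1 ord0), @cst m 0 ord0) : prodS X (Delta 0) m).
Proof. by rewrite /pb_pred /= Ht_p I8 sact_comp bpath. Qed.

Definition rfun m (b : BB m) : Fibre p y m := exist _ _ (r_prf b).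

Lemma rfun_nat m' m (f : ohom m' m) (b : BB m) : rfun (sact f b) = sact f (rfun b).
Proof.
apply: sig_extP => /=; congr pair; last exact: ohom0_uniq.
by rewrite -Ht_nat cst_comp.
Qed.

Definition rmap : sMap BB (Fibre p y) := @SMap _ _ rfun rfun_nat.

Lemma inA_incl m (a : Fibre p y m) : inA (fib_incl p y m a).
Proof.
rewrite /inA.
have -> : bz (fib_incl p y m a) = sact (bar (proj1_sig a).2) (sact (@cst 1 0 ord0) y) by [].
rewrite -sact_comp; congr sact; exact: ohom0_uniq.
Qed.

Lemma final : is_deformation_retract (fib_incl p y).
Proof.
exists rmap, Hmap; split.
- move=> m [[x t] h]; apply: sig_extP => /=; congr pair; last exact: ohom0_uniq.
  rewrite Ht_A //; exact: (inA_incl (exist _ (x, t) h)).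
- move=> m b; apply: sig_extP => /=; congr pair.
  apply: sig_extP => /=; rewrite I9 sact_comp bpath -!sact_comp; congr sact; exact: ohom0_uniq.
- move=> m b; apply: sig_extP => /=.
  case: b => [[x [z hz]] hb] /=; congr pair.
    exact: (Ht_top (exist _ (x, exist _ z hz) hb)).
  by apply: sig_extP => /=; rewrite I7 sact_id.
Qed.

End Main.

Theorem proposition4p12 (X Y : sSet) (p : sMap X Y) (y : Y 0) :
  right_fibration p -> is_deformation_retract (fib_incl p y).
Proof. move=> hf; exact: final. Qed.
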